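(* Consider the Cucker–Smale model with bonding force $$\dot{\mathbf{x}}_i=\mathbf{v}_i,\qquad \dot{\mathbf{v}}_i=\frac{\kappa_0}{N}\sum_{j=1}^N\psi(\|\mathbf{x}_j-\mathbf{x}_i\|)(\mathbf{v}_j-\mathbf{v}_i)+\frac{\kappa_1}{N}\sum_{j\ne i}\Big\langle\mathbf{v}_j-\mathbf{v}_i,\frac{\mathbf{x}_j-\mathbf{x}_i}{\|\mathbf{x}_j-\mathbf{x}_i\|}\Big\rangle\frac{\mathbf{x}_j-\mathbf{x}_i}{\|\mathbf{x}_j-\mathbf{x}_i\|}+\frac{\kappa_2}{N}\sum_{j\ne i}\big(\|\mathbf{x}_j-\mathbf{x}_i\|-d^\infty_{ij}\big)\frac{\mathbf{x}_j-\mathbf{x}_i}{\|\mathbf{x}_j-\mathbf{x}_i\|}.$$ Suppose the initial data and parameters satisfy $$\min_{i\ne j}\|\mathbf{x}_i^0-\mathbf{x}_j^0\|>0,\quad \min_{i\ne j}d^\infty_{ij}>\sqrt{\frac{2NE(0)}{\kappa_2}},\quad (X^0,V^0)\in S,\quad \kappa_0>0,\ \kappa_1>0,\ \kappa_2>0,$$ and for $\tau\in(0,\infty]$ let $\{(\mathbf{x}_i,\mathbf{v}_i)\}$ be a smooth solution on $[0,\tau)$. Then for all $i\ne j$ and all $t\in[0,\tau)$, $$0<L\le\|\mathbf{x}_i(t)-\mathbf{x}_j(t)\|\le U.$$ In particular no finite-time collisions occur.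
   Context: $N\ge2$, $d\ge1$, Euclidean norm and inner product on $\mathbb{R}^d$; $[d^\infty_{ij}]$ real $N\times N$ matrix with $d^\infty_{ii}=0$, $d^\infty_{ij}=d^\infty_{ji}$; $(X^0,V^0)=(\mathbf{x}_i(0),\mathbf{v}_i(0))_i$. Energy: $E:=\frac12\sum_i\|\mathbf{v}_i\|^2+\frac{\kappa_2}{4N}\sum_{i,j}(\|\mathbf{x}_j-\mathbf{x}_i\|-d^\infty_{ij})^2$. $U:=\max_{i\ne j}d^\infty_{ij}+\sqrt{2NE(0)/\kappa_2}$, $L:=\min_{i\ne j}d^\infty_{ij}-\sqrt{2NE(0)/\kappa_2}$, $S:=\{(X,V)\in\mathbb{R}^{2dN}:\max_{i\ne j}\|\mathbf{x}_i-\mathbf{x}_j\|\le U\}$. The weight $\psi:[0,\infty)\to[0,\infty)$ is locally Lipschitz with $0\le\psi(r)\le\psi_M$ for all $r\ge0$ and $\psi_m:=\min_{r\in[0,U]}\psi(r)>0$. A smooth solution is a $C^1$ solution with $\mathbf{x}_i(t)\ne\mathbf{x}_j(t)$ for $i\ne j$. *)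

(* Defs.v *)
From HB Require Import structures.
From mathcomp Require Import all_boot all_order all_algebra.
From mathcomp Require Import all_classical all_reals all_analysis.
Set Implicit Arguments. Unset Strict Implicit. Unset Printing Implicit Defensive.
Import Order.TTheory GRing.Theory Num.Theory.
Import numFieldNormedType.Exports.
Local Open Scope classical_set_scope.
Local Open Scope ring_scope.

Section CS.
Variables (R : realType) (N d : nat).

Definition edot (u w : 'rV[R]_d) : R := \sum_(k < d) u 0 k * w 0 k.
Definition enorm (u : 'rV[R]_d) : R := Num.sqrt (\sum_(k < d) u 0 k ^+ 2).

Definition energy (kappa2 : R) (D : 'I_N -> 'I_N -> R)
  (X V : 'I_N -> 'rV[R]_d) : R :=
  2^-1 * \sum_(i < N) enorm (V i) ^+ 2
  + kappa2 / (4 * N%:R) *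
    \sum_(i < N) \sum_(j < N) (enorm (X j - X i) - D i j) ^+ 2.

(* max / min of d^oo_{ij} over i <> j (N >= 2 makes these nonempty);
   the seeds -/+ sum |D i j| are below/above every entry, so they do not
   affect the value. *)
Definition Dabs (D : 'I_N -> 'I_N -> R) : R :=
  \sum_(i < N) \sum_(j < N) `|D i j|.
Definition Dmax (D : 'I_N -> 'I_N -> R) : R :=
  \big[Num.max/ - Dabs D]_(i < N) \big[Num.max/ - Dabs D]_(j < N | i != j) D i j.
Definition Dmin (D : 'I_N -> 'I_N -> R) : R :=
  \big[Num.min/ Dabs D]_(i < N) \big[Num.min/ Dabs D]_(j < N | i != j) D i j.

Definition Ubound (kappa2 : R) (D : 'I_N -> 'I_N -> R) (X0 V0 : 'I_N -> 'rV[R]_d) : R :=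
  Dmax D + Num.sqrt (2 * N%:R * energy kappa2 D X0 V0 / kappa2).
Definition Lbound (kappa2 : R) (D : 'I_N -> 'I_N -> R) (X0 V0 : 'I_N -> 'rV[R]_d) : R :=
  Dmin D - Num.sqrt (2 * N%:R * energy kappa2 D X0 V0 / kappa2).

Definition cs_rhs (psi : R -> R) (kappa0 kappa1 kappa2 : R)
  (D : 'I_N -> 'I_N -> R) (X V : 'I_N -> 'rV[R]_d) (i : 'I_N) : 'rV[R]_d :=
  (kappa0 / N%:R) *: \sum_(j < N) psi (enorm (X j - X i)) *: (V j - V i)
  + (kappa1 / N%:R) *: \sum_(j < N | j != i)
      (edot (V j - V i) ((enorm (X j - X i))^-1 *: (X j - X i)))
        *: ((enorm (X j - X i))^-1 *: (X j - X i))
  + (kappa2 / N%:R) *: \sum_(j < N | j != i)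
      (enorm (X j - X i) - D i j) *: ((enorm (X j - X i))^-1 *: (X j - X i)).

Definition loc_lipschitz0 (psi : R -> R) : Prop :=
  forall r0 : R, 0 <= r0 -> exists delta : R, exists K : R, 0 < delta /\
    forall r s : R, 0 <= r -> 0 <= s -> `|r - r0| < delta -> `|s - r0| < delta ->
      `|psi r - psi s| <= K * `|r - s|.

Definition smooth_solution (psi : R -> R) (kappa0 kappa1 kappa2 : R)
  (D : 'I_N -> 'I_N -> R) (tau : \bar R) (X0 V0 : 'I_N -> 'rV[R]_d)
  (x v : R -> 'I_N -> 'rV[R]_d) : Prop :=
  let I := [set t : R | 0 <= t /\ (t%:E < tau)%E] in
  (forall i, x 0 i = X0 i /\ v 0 i = V0 i) /\
  (forall i, {within I, continuous (fun t => x t i)}) /\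
  (forall i, {within I, continuous (fun t => v t i)}) /\
  (forall t, 0 < t -> (t%:E < tau)%E -> forall i,
     is_derive t (1 : R) (fun s => x s i) (v t i) /\
     is_derive t (1 : R) (fun s => v s i) (cs_rhs psi kappa0 kappa1 kappa2 D (x t) (v t) i)) /\
  (forall t, I t -> forall i j, i != j -> x t i != x t j).

End CS.

(* Main.v *)
Require Import Defs.
From HB Require Import structures.
From mathcomp Require Import all_boot all_order all_algebra.
From mathcomp Require Import all_classical all_reals all_analysis.
From mathcomp Require Import ring lra.
Set Implicit Arguments. Unset Strict Implicit. Unset Printing Implicit Defensive.
Import Order.TTheory GRing.Theory Num.Theory.
Import numFieldNormedType.Exports.
Local Open Scope classical_set_scope.
Local Open Scope ring_scope.

Section Wrap.
Variable R : realType.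

Lemma isd_cst (c t : R) : is_derive t (1:R) (fun _ : R => c) 0.
Proof. exact: is_derive_cst. Qed.

Lemma isd_add (f g : R -> R) t a b : is_derive t (1:R) f a -> is_derive t (1:R) g b ->
  is_derive t (1:R) (fun s => f s + g s) (a + b).
Proof. move=> ha hb; exact: is_deriveD. Qed.

Lemma isd_sub (f g : R -> R) t a b : is_derive t (1:R) f a -> is_derive t (1:R) g b ->
  is_derive t (1:R) (fun s => f s - g s) (a - b).
Proof. move=> ha hb; exact: is_deriveB. Qed.

Lemma isd_mul (f g : R -> R) t a b : is_derive t (1:R) f a -> is_derive t (1:R) g b ->
  is_derive t (1:R) (fun s => f s * g s) (f t * b + g t * a).
Proof. move=> ha hb; exact: is_deriveM. Qed.

Lemma isd_cmul (f : R -> R) c t a : is_derive t (1:R) f a ->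
  is_derive t (1:R) (fun s => c * f s) (c * a).
Proof. move=> ha; exact: is_deriveZ. Qed.

Lemma isd_sq (f : R -> R) t a : is_derive t (1:R) f a ->
  is_derive t (1:R) (fun s => f s ^+ 2) (2 * f t * a).
Proof.
move=> ha; rewrite (_ : (fun s => f s ^+ 2) = (fun s => f s * f s)); last first.
  by apply: funext => s; rewrite expr2.
apply: (is_derive_eq (isd_mul ha ha)).
by rewrite mulr2n mulrDl mul1r; ring.
Qed.

Lemma isd_sum n (f : 'I_n -> R -> R) t (a : 'I_n -> R) :
  (forall i, is_derive t (1:R) (f i) (a i)) ->
  is_derive t (1:R) (fun s => \sum_(i < n) f i s) (\sum_(i < n) a i).
Proof.
elim: n f a => [|n IH] f a h.
  under eq_fun do rewrite big_ord0. rewrite big_ord0; exact: isd_cst.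
under eq_fun do rewrite big_ord_recr. rewrite big_ord_recr.
apply: isd_add => //. exact: (IH (fun i => f (widen_ord (leqnSn n) i))).
Qed.

Lemma isd_sqrt (f : R -> R) t a : 0 < f t -> is_derive t (1:R) f a ->
  is_derive t (1:R) (fun s => Num.sqrt (f s)) ((2 * Num.sqrt (f t))^-1 * a).
Proof.
move=> ft ha.
have h := @is_derive1_comp R Num.sqrt f t _ a (is_derive1_sqrt ft) ha.
exact: h.
Qed.

Lemma isd_coord d (f : R -> 'rV[R]_d) t (df : 'rV[R]_d) k :
  is_derive t (1:R) f df -> is_derive t (1:R) (fun s => f s 0 k) (df 0 k).
Proof.
move=> [hd hD].
have hk := (derivable_mxP f t 1).1 hd 0 k.
apply: is_derive_eq; first exact: derivableP.
by rewrite -hD derive_mx // mxE.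
Qed.

Lemma isd_vsub d (f g : R -> 'rV[R]_d) t a b : is_derive t (1:R) f a -> is_derive t (1:R) g b ->
  is_derive t (1:R) (fun s => f s - g s) (a - b).
Proof. move=> ha hb; exact: is_deriveB. Qed.

Context {T : Type} (F : set_system T) {FF : Filter F}.

Lemma cvg_add (f g : T -> R) (a b : R) : f @ F --> a -> g @ F --> b ->
  (fun s => f s + g s) @ F --> a + b.
Proof. move=> ha hb; exact: cvgD. Qed.

Lemma cvg_sub (f g : T -> R) (a b : R) : f @ F --> a -> g @ F --> b ->
  (fun s => f s - g s) @ F --> a - b.
Proof. move=> ha hb; exact: cvgB. Qed.

Lemma cvg_vsub d (f g : T -> 'rV[R]_d) (a b : 'rV[R]_d) : f @ F --> a -> g @ F --> b ->
  (fun s => f s - g s) @ F --> a - b.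
Proof. move=> ha hb; exact: cvgB. Qed.

Lemma cvg_mul (f g : T -> R) (a b : R) : f @ F --> a -> g @ F --> b ->
  (fun s => f s * g s) @ F --> a * b.
Proof. move=> ha hb; exact: cvgM. Qed.

Lemma cvg_sumR n (f : 'I_n -> T -> R) (a : 'I_n -> R) :
  (forall i, f i @ F --> a i) ->
  (fun s => \sum_(i < n) f i s) @ F --> \sum_(i < n) a i.
Proof.
elim: n f a => [|n IH] f a h.
  under eq_fun do rewrite big_ord0. rewrite big_ord0; exact: cvg_cst.
under eq_fun do rewrite big_ord_recr. rewrite big_ord_recr.
apply: cvg_add => //. exact: (IH (fun i => f (widen_ord (leqnSn n) i))).
Qed.

Lemma cvg_sqrt (f : T -> R) (a : R) : f @ F --> a -> (fun s => Num.sqrt (f s)) @ F --> Num.sqrt a.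
Proof. move=> h; exact: (continuous_cvg _ (@sqrt_continuous R a) h). Qed.

Lemma cvg_coord d (f : T -> 'rV[R]_d) (a : 'rV[R]_d) k : f @ F --> a -> (fun s => f s 0 k) @ F --> a 0 k.
Proof. move=> h; exact: (continuous_cvg _ (@coord_continuous R 1 d 0 k a) h). Qed.

End Wrap.


Section Alg.
Variables (R : realType) (N d : nat).
Implicit Types (u w : 'rV[R]_d).

Lemma edotC u w : edot u w = edot w u.
Proof. by rewrite /edot; apply: eq_bigr => k _; rewrite mulrC. Qed.

Lemma edotDr u w1 w2 : edot u (w1 + w2) = edot u w1 + edot u w2.
Proof. by rewrite /edot -big_split; apply: eq_bigr => k _; rewrite mxE mulrDr. Qed.

Lemma edotZr u a w : edot u (a *: w) = a * edot u w.
Proof. by rewrite /edot mulr_sumr; apply: eq_bigr => k _; rewrite mxE mulrCA. Qed.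

Lemma edotNr u w : edot u (- w) = - edot u w.
Proof. by rewrite /edot -sumrN; apply: eq_bigr => k _; rewrite mxE mulrN. Qed.

Lemma edotNl u w : edot (- u) w = - edot u w.
Proof. by rewrite edotC edotNr edotC. Qed.

Lemma edotBl u1 u2 w : edot (u1 - u2) w = edot u1 w - edot u2 w.
Proof. by rewrite edotC edotDr edotNr !(edotC w). Qed.

Lemma edot0r u : edot u 0 = 0.
Proof. by rewrite /edot big1 // => k _; rewrite mxE mulr0. Qed.

Lemma edot_sumr u (P : pred 'I_N) (f : 'I_N -> 'rV[R]_d) :
  edot u (\sum_(j < N | P j) f j) = \sum_(j < N | P j) edot u (f j).
Proof.
rewrite /edot.
under eq_bigr do rewrite summxE mulr_sumr.
by rewrite exchange_big.
Qed.

Lemma edot_ge0 u : 0 <= edot u u.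
Proof. by rewrite /edot sumr_ge0 // => k _; rewrite -expr2 sqr_ge0. Qed.

Lemma enorm_sq u : enorm u ^+ 2 = \sum_(k < d) u 0 k ^+ 2.
Proof. by rewrite /enorm sqr_sqrtr // sumr_ge0 // => k _; rewrite sqr_ge0. Qed.

Lemma enormN u : enorm (- u) = enorm u.
Proof. by rewrite /enorm; congr Num.sqrt; apply: eq_bigr => k _; rewrite mxE sqrrN. Qed.

Lemma enormB u w : enorm (u - w) = enorm (w - u).
Proof. by rewrite -enormN opprB. Qed.

Lemma enorm_ge0 u : 0 <= enorm u.
Proof. exact: sqrtr_ge0. Qed.

Lemma sym_sum (w : 'I_N -> 'I_N -> R) (uu : 'I_N -> 'I_N -> 'rV[R]_d) (V : 'I_N -> 'rV[R]_d) :
  (forall i j, w j i = w i j) -> (forall i j, uu j i = - uu i j) ->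
  \sum_(i < N) \sum_(j < N) w i j * edot (V i) (uu i j) =
  - 2^-1 * \sum_(i < N) \sum_(j < N) w i j * edot (V j - V i) (uu i j).
Proof.
move=> hw hu.
set S := LHS.
have hS : S = - \sum_(i < N) \sum_(j < N) w i j * edot (V j) (uu i j).
  rewrite /S exchange_big -sumrN; apply: eq_bigr => i _.
  rewrite -sumrN; apply: eq_bigr => j _.
  by rewrite hw hu edotNr mulrN.
have -> : \sum_(i < N) \sum_(j < N) w i j * edot (V j - V i) (uu i j) =
   \sum_(i < N) \sum_(j < N) w i j * edot (V j) (uu i j) - S.
  rewrite /S -sumrB; apply: eq_bigr => i _.
  rewrite -sumrB; apply: eq_bigr => j _.
  by rewrite edotBl mulrBr.
move: hS; set T := \sum_(i < N) _ => hS.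
have -> : T = - S by rewrite hS opprK.
by field.
Qed.

Lemma filt_sum i (G : 'I_N -> 'rV[R]_d) : G i = 0 ->
  \sum_(j < N | j != i) G j = \sum_(j < N) G j.
Proof.
move=> hG; rewrite [RHS](bigD1 i) //= hG add0r.
by apply: eq_bigr.
Qed.

End Alg.


Section Dissip.
Variables (R : realType) (N d : nat).
Variables (psi : R -> R) (k0 k1 k2 : R) (D : 'I_N -> 'I_N -> R).
Hypotheses (hpsi : forall r, 0 <= r -> 0 <= psi r) (hk0 : 0 <= k0) (hk1 : 0 <= k1)
  (hDsym : forall i j, D i j = D j i) (hN : (0 < N)%N).
Variables (X V : 'I_N -> 'rV[R]_d).

Local Notation r i j := (enorm (X j - X i)).
Local Notation e i j := ((enorm (X j - X i))^-1 *: (X j - X i)).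

Lemma e_anti i j : e j i = - e i j.
Proof. by rewrite enormB -scalerN opprB. Qed.

Lemma e_diag i : e i i = 0.
Proof. by rewrite subrr scaler0. Qed.

Lemma dissip :
  \sum_(i < N) edot (V i) (cs_rhs psi k0 k1 k2 D X V i) +
  k2 / (4 * N%:R) * \sum_(i < N) \sum_(j < N)
     (2 * (r i j - D i j) * edot (V j - V i) (e i j)) <= 0.
Proof.
have E1 : forall i, edot (V i) (cs_rhs psi k0 k1 k2 D X V i) =
  k0 / N%:R * \sum_(j < N) psi (r i j) * edot (V i) (V j - V i) +
  k1 / N%:R * \sum_(j < N) edot (V j - V i) (e i j) * edot (V i) (e i j) +
  k2 / N%:R * \sum_(j < N) (r i j - D i j) * edot (V i) (e i j).
  move=> i; rewrite /cs_rhs !edotDr !edotZr.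
  rewrite (filt_sum (i := i)); last by rewrite e_diag scaler0.
  rewrite [X in _ + _ * edot _ X](filt_sum (i := i)); last by rewrite e_diag scaler0.
  rewrite !edot_sumr.
  congr (_ * _ + _ * _ + _ * _); apply: eq_bigr => j _; by rewrite edotZr.
under eq_bigr do rewrite E1.
rewrite !big_split /= -!mulr_sumr.
rewrite (@sym_sum R N d (fun i j => psi (r i j)) (fun i j => V j - V i)); last 2 first.
- by move=> i j; rewrite enormB.
- by move=> i j; rewrite opprB.
rewrite (@sym_sum R N d (fun i j => edot (V j - V i) (e i j)) (fun i j => e i j)); last 2 first.
- by move=> i j; rewrite e_anti -opprB edotNl edotNr opprK.
- by move=> i j; rewrite e_anti.
rewrite (@sym_sum R N d (fun i j => r i j - D i j) (fun i j => e i j)); last 2 first.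
- by move=> i j; rewrite enormB hDsym.
- by move=> i j; rewrite e_anti.
have -> : \sum_(i < N) \sum_(j < N) (2 * (r i j - D i j) * edot (V j - V i) (e i j)) =
   2 * \sum_(i < N) \sum_(j < N) ((r i j - D i j) * edot (V j - V i) (e i j)).
  rewrite mulr_sumr; apply: eq_bigr => i _; rewrite mulr_sumr; apply: eq_bigr => j _.
  by rewrite mulrA.
set Q0 := \sum_(i < N) _.
set Q1 := \sum_(i < N) _.
set Cs := \sum_(i < N) _.
have hQ0 : 0 <= Q0.
  apply: sumr_ge0 => i _; apply: sumr_ge0 => j _.
  by apply: mulr_ge0; [apply: hpsi; exact: enorm_ge0 | exact: edot_ge0].
have hQ1 : 0 <= Q1.
  apply: sumr_ge0 => i _; apply: sumr_ge0 => j _.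
  by rewrite -expr2 sqr_ge0.
have hNR : (0 : R) < N%:R by rewrite ltr0n.
have -> : k0 / N%:R * (- 2^-1 * Q0) + k1 / N%:R * (- 2^-1 * Q1) +
   k2 / N%:R * (- 2^-1 * Cs) + k2 / (4 * N%:R) * (2 * Cs) =
   - (2^-1 / N%:R) * (k0 * Q0 + k1 * Q1).
  by field; rewrite lt0r_neq0.
rewrite mulNr oppr_le0; apply: mulr_ge0.
  by rewrite divr_ge0 // ltW.
by rewrite addr_ge0 // mulr_ge0.
Qed.

End Dissip.


Section Bounds.
Variables (R : realType).

Lemma max_ge (I : eqType) (s : seq I) (x0 : R) (P : pred I) (F : I -> R) i :
  i \in s -> P i -> F i <= \big[Num.max/x0]_(j <- s | P j) F j.
Proof.
elim: s => [//|a s IH]; rewrite inE big_cons => /orP[/eqP <-|/IH h] Pi.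
  by rewrite Pi le_max lexx.
case: (P a); last exact: h Pi.
by rewrite le_max h ?orbT.
Qed.

Lemma min_le (I : eqType) (s : seq I) (x0 : R) (P : pred I) (F : I -> R) i :
  i \in s -> P i -> \big[Num.min/x0]_(j <- s | P j) F j <= F i.
Proof.
elim: s => [//|a s IH]; rewrite inE big_cons => /orP[/eqP <-|/IH h] Pi.
  by rewrite Pi ge_min lexx.
case: (P a); last exact: h Pi.
by rewrite ge_min h ?orbT.
Qed.

Lemma min_gt (I : Type) (s : seq I) (x0 c : R) (P : pred I) (F : I -> R) :
  c < x0 -> (forall j, P j -> c < F j) -> c < \big[Num.min/x0]_(j <- s | P j) F j.
Proof.
move=> h0 hF; apply: (big_ind (fun y => c < y)) => //.
by move=> a b ha hb; rewrite lt_min ha hb.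
Qed.

Variable N : nat.
Variable D : 'I_N -> 'I_N -> R.

Lemma Dmax_ge i j : i != j -> D i j <= Dmax D.
Proof.
move=> hij; rewrite /Dmax.
apply: le_trans; last first.
  by apply: max_ge; [exact: mem_index_enum|].
by apply: max_ge; [exact: mem_index_enum|].
Qed.

Lemma Dmin_le i j : i != j -> Dmin D <= D i j.
Proof.
move=> hij; rewrite /Dmin.
apply: le_trans.
  by apply: min_le; [exact: mem_index_enum|].
by apply: min_le; [exact: mem_index_enum|].
Qed.

Lemma sum_ge_one (I : finType) (P : pred I) (g : I -> R) k :
  (forall a, 0 <= g a) -> P k -> g k <= \sum_(a | P a) g a.
Proof.
move=> hg Pk; rewrite (bigD1 k) //= lerDl sumr_ge0 //.
Qed.

Lemma Dmin_gt c (i0 j0 : 'I_N) : i0 != j0 ->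
  (forall i j, i != j -> c < D i j) -> c < Dmin D.
Proof.
move=> h0 hD; rewrite /Dmin.
have hA : c < Dabs D.
  apply: (lt_le_trans (hD _ _ h0)).
  apply: le_trans (real_ler_norm _) _; first exact: num_real.
  have h1 : `|D i0 j0| <= \sum_(j < N) `|D i0 j|.
    by apply: (@sum_ge_one _ predT (fun j => `|D i0 j|)).
  apply: (le_trans h1); rewrite /Dabs.
  apply: (@sum_ge_one _ predT (fun i => \sum_(j < N) `|D i j|)) => // a.
  by apply: sumr_ge0.
apply: min_gt => // i _; apply: min_gt => // j hij.
by apply: hD.
Qed.

End Bounds.


Section En.
Variables (R : realType) (N d : nat).

Lemma energyE (k2 : R) (D : 'I_N -> 'I_N -> R) (X V : 'I_N -> 'rV[R]_d) :
  energy k2 D X V = 2^-1 * \sum_(i < N) \sum_(k < d) V i 0 k ^+ 2 +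
    k2 / (4 * N%:R) * \sum_(i < N) \sum_(j < N) (enorm (X j - X i) - D i j) ^+ 2.
Proof. by rewrite /energy; congr (_ * _ + _); apply: eq_bigr => i _; rewrite enorm_sq. Qed.

Lemma energy_lb (k2 : R) (D : 'I_N -> 'I_N -> R) (X V : 'I_N -> 'rV[R]_d) i j :
  i != j -> 0 <= k2 -> (forall i j, D i j = D j i) ->
  k2 / (4 * N%:R) * (2 * (enorm (X i - X j) - D i j) ^+ 2) <= energy k2 D X V.
Proof.
move=> hij hk hD; rewrite /energy.
have h1 : 0 <= 2^-1 * \sum_(i < N) enorm (V i) ^+ 2 :> R.
  by rewrite mulr_ge0 // sumr_ge0 // => a _; rewrite sqr_ge0.
rewrite -[leLHS]add0r; apply: lerD; first exact: h1.
apply: ler_wpM2l; first by rewrite divr_ge0 // mulr_ge0 // ler0n.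
set f := fun a b => (enorm (X b - X a) - D a b) ^+ 2.
have hf : forall a b, 0 <= f a b by move=> a b; rewrite /f sqr_ge0.
have -> : 2 * (enorm (X i - X j) - D i j) ^+ 2 = f i j + f j i.
  by rewrite /f [D j i]hD (enormB (X i)) mulr2n mulrDl mul1r.
rewrite (bigD1 i) //= [X in _ <= _ + X](bigD1 j) /=; last by rewrite eq_sym.
apply: lerD.
  by apply: (@sum_ge_one _ _ predT (fun b => f i b)).
rewrite -[leLHS]addr0; apply: lerD.
  by apply: (@sum_ge_one _ _ predT (fun b => f j b)).
by apply: sumr_ge0 => a _; apply: sumr_ge0 => b _; apply: sqr_ge0.
Qed.

Lemma sumsq_gt0 (u : 'rV[R]_d) : u != 0 -> 0 < \sum_(k < d) u 0 k ^+ 2.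
Proof.
move=> hu; rewrite lt_neqAle sumr_ge0 ?andbT; last by move=> k _; rewrite sqr_ge0.
apply: contra hu => /eqP/esym h; apply/eqP/matrixP => a k.
rewrite (ord1 a) mxE.
have := psumr_eq0P (fun k _ => sqr_ge0 (u 0 k)) h (isT : predT k).
by move=> hk; apply/eqP; rewrite -sqrf_eq0; apply/eqP.
Qed.

Context {T : Type} (F : set_system T) {FF : Filter F}.

Lemma cvg_sq (f : T -> R) (a : R) : f @ F --> a -> (fun s => f s ^+ 2) @ F --> a ^+ 2.
Proof.
move=> h; rewrite (_ : (fun s => f s ^+ 2) = (fun s => f s * f s)); last first.
  by apply: funext => s; rewrite expr2.
by rewrite expr2; apply: cvg_mul.
Qed.

Lemma cvg_enorm (f : T -> 'rV[R]_d) a : f @ F --> a -> (fun s => enorm (f s)) @ F --> enorm a.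
Proof.
move=> h; rewrite /enorm; apply: cvg_sqrt; apply: cvg_sumR => k.
by apply: cvg_sq; apply: cvg_coord.
Qed.

Lemma cvg_energy (k2 : R) (D : 'I_N -> 'I_N -> R) (xs vs : T -> 'I_N -> 'rV[R]_d) X V :
  (forall i, (fun s => xs s i) @ F --> X i) -> (forall i, (fun s => vs s i) @ F --> V i) ->
  (fun s => energy k2 D (xs s) (vs s)) @ F --> energy k2 D X V.
Proof.
move=> hx hv; rewrite /energy.
apply: cvg_add; apply: cvg_mul; try exact: cvg_cst.
  by apply: cvg_sumR => i; apply: cvg_sq; apply: cvg_enorm.
apply: cvg_sumR => i; apply: cvg_sumR => j; apply: cvg_sq; apply: cvg_sub; last exact: cvg_cst.
by apply: cvg_enorm; apply: cvg_vsub.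
Qed.

End En.


Section Der.
Variables (R : realType) (N d : nat).

Lemma energy_derive (psi : R -> R) (k0 k1 k2 : R) (D : 'I_N -> 'I_N -> R)
  (x v : R -> 'I_N -> 'rV[R]_d) (s : R) :
  (forall i, is_derive s (1:R) (fun u => x u i) (v s i)) ->
  (forall i, is_derive s (1:R) (fun u => v u i) (cs_rhs psi k0 k1 k2 D (x s) (v s) i)) ->
  (forall i j, i != j -> x s i != x s j) ->
  is_derive s (1:R) (fun u => energy k2 D (x u) (v u))
   (\sum_(i < N) edot (v s i) (cs_rhs psi k0 k1 k2 D (x s) (v s) i) +
    k2 / (4 * N%:R) * \sum_(i < N) \sum_(j < N)
     (2 * (enorm (x s j - x s i) - D i j) *
       edot (v s j - v s i) ((enorm (x s j - x s i))^-1 *: (x s j - x s i)))).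
Proof.
move=> hxd hvd hcoll.
have hr : forall i j, is_derive s (1:R) (fun u => enorm (x u j - x u i))
   (edot (v s j - v s i) ((enorm (x s j - x s i))^-1 *: (x s j - x s i))).
  move=> i j; case: (eqVneq i j) => [<-|hij].
    have -> : (fun u => enorm (x u i - x u i)) = (fun _ => enorm (0 : 'rV[R]_d)).
      by apply: funext => u; rewrite subrr.
    rewrite !subrr scaler0 edot0r; exact: isd_cst.
  have hne : x s j - x s i != 0 by rewrite subr_eq0 eq_sym hcoll.
  have hpos := sumsq_gt0 hne.
  rewrite /enorm.
  apply: (is_derive_eq (isd_sqrt (f := fun u => \sum_(k < d) (x u j - x u i) 0 k ^+ 2) hpos
     (isd_sum (fun k => isd_sq (isd_coord k (isd_vsub (hxd j) (hxd i))))))).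
  rewrite edotZr /edot.
  have -> : \sum_(k < d) 2 * (x s j - x s i) 0 k * (v s j - v s i) 0 k =
     2 * \sum_(k < d) (v s j - v s i) 0 k * (x s j - x s i) 0 k.
    by rewrite mulr_sumr; apply: eq_bigr => k _; rewrite -mulrA [X in _ * X]mulrC.
  have hn : Num.sqrt (\sum_(k < d) (x s j - x s i) 0 k ^+ 2) != 0.
    by rewrite gt_eqF // sqrtr_gt0.
  by field.
have -> : (fun u => energy k2 D (x u) (v u)) = (fun u =>
   2^-1 * \sum_(i < N) \sum_(k < d) v u i 0 k ^+ 2 +
    k2 / (4 * N%:R) * \sum_(i < N) \sum_(j < N) (enorm (x u j - x u i) - D i j) ^+ 2).
  by apply: funext => u; rewrite energyE.
have h1 := isd_cmul (2^-1)
  (isd_sum (fun i => isd_sum (fun k => isd_sq (isd_coord k (hvd i))))).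
have h2 := isd_cmul (k2 / (4 * N%:R)) (isd_sum (fun i => isd_sum (fun j =>
      isd_sq (isd_sub (hr i j) (isd_cst (D i j) s))))).
apply: (is_derive_eq (isd_add h1 h2)).
congr (_ + _).
  rewrite mulr_sumr; apply: eq_bigr => i _; rewrite /edot mulr_sumr; apply: eq_bigr => k _.
  by rewrite mulrA mulrA mulVf ?mul1r // pnatr_eq0.
by congr (_ * _); apply: eq_bigr => i _; apply: eq_bigr => j _; rewrite subr0.
Qed.

End Der.

Unset Implicit Arguments.
Set Strict Implicit.


Theorem theorem4p1 (R : realType) (N d : nat) (hN : (2 <= N)%N) (hd : (1 <= d)%N)
  (D : 'I_N -> 'I_N -> R)
  (hD0 : forall i, D i i = 0) (hDsym : forall i j, D i j = D j i)
  (psi : R -> R) (psiM : R)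
  (hpsi_lip : loc_lipschitz0 psi)
  (hpsi_bd : forall r, 0 <= r -> 0 <= psi r <= psiM)
  (kappa0 kappa1 kappa2 : R)
  (hk0 : 0 < kappa0) (hk1 : 0 < kappa1) (hk2 : 0 < kappa2)
  (X0 V0 : 'I_N -> 'rV[R]_d)
  (hpsi_m : exists psim : R, 0 < psim /\
     forall r, 0 <= r <= Ubound kappa2 D X0 V0 -> psim <= psi r)
  (hX0 : forall i j, i != j -> 0 < enorm (X0 i - X0 j))
  (hDmin : forall i j, i != j ->
     Num.sqrt (2 * N%:R * energy kappa2 D X0 V0 / kappa2) < D i j)
  (hS : forall i j, i != j -> enorm (X0 i - X0 j) <= Ubound kappa2 D X0 V0)
  (tau : \bar R) (htau : (0 < tau)%E)
  (x v : R -> 'I_N -> 'rV[R]_d)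
  (hsol : smooth_solution psi kappa0 kappa1 kappa2 D tau X0 V0 x v) :
  forall i j, i != j -> forall t : R, 0 <= t -> (t%:E < tau)%E ->
    0 < Lbound kappa2 D X0 V0 /\
    Lbound kappa2 D X0 V0 <= enorm (x t i - x t j) <= Ubound kappa2 D X0 V0.
Proof.
move=> i j hij t ht0 httau.
case: hsol => hinit [hxc [hvc [hder hcoll]]].
rewrite /Lbound /Ubound.
set E0 := energy kappa2 D X0 V0.
set sig := Num.sqrt (2 * N%:R * E0 / kappa2).
have hNR : (0:R) < N%:R by rewrite ltr0n; apply: leq_trans hN.
have hN0 : (0 < N)%N by apply: leq_trans hN.
have hE0 : E0 = energy kappa2 D (x 0) (v 0).
  by rewrite /E0; congr energy; apply: funext => k; case: (hinit k).
set Ef := fun u => energy kappa2 D (x u) (v u).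
have hcont : {within [set t : R | 0 <= t /\ (t%:E < tau)%E], continuous Ef}.
  move=> t0; apply: cvg_energy => k; [exact: hxc | exact: hvc].
have hEt : Ef t <= E0.
  case: (eqVneq t 0) => [->|tne0]; first by rewrite hE0.
  have ht : 0 < t by rewrite lt_neqAle eq_sym tne0.
  have hin : forall u, u \in `]0, t[ -> 0 < u /\ (u%:E < tau)%E.
    move=> u; rewrite in_itv /= => /andP[h1 h2]; split => //.
    by apply: lt_trans httau; rewrite lte_fin.
  have hD' : forall u, u \in `]0, t[ -> is_derive u (1:R) Ef _ :=
    fun u hu => energy_derive (psi := psi) (k0 := kappa0) (k1 := kappa1) (D := D)
      (fun k => (hder u (hin u hu).1 (hin u hu).2 k).1)
      (fun k => (hder u (hin u hu).1 (hin u hu).2 k).2)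
      (hcoll u (conj (ltW (hin u hu).1) (hin u hu).2)).
  have H := @ler0_derive1_le_cc R Ef 0 t.
  rewrite hE0; apply: H.
  - by move=> u hu; case: (hD' u hu).
  - move=> u hu; rewrite derive1E; case: (hD' u hu) => _ ->.
    apply: dissip => //; [|exact: ltW|exact: ltW].
    by move=> r hr; case/andP: (hpsi_bd r hr).
  - apply: continuous_subspaceW hcont => u /=; rewrite in_itv /= => /andP[h1 h2].
    by split => //; apply: le_lt_trans httau; rewrite lee_fin.
  - by rewrite in_itv /= lexx ltW.
  - by rewrite in_itv /= lexx ltW.
  - exact: ltW.
have hlb := energy_lb (x t) (v t) hij (ltW hk2) hDsym.
have hbound : (enorm (x t i - x t j) - D i j) ^+ 2 <= 2 * N%:R * E0 / kappa2.
  have h := le_trans hlb hEt.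
  rewrite ler_pdivlMr //.
  move: h; set y := _ ^+ 2 => h.
  have -> : y * kappa2 = (kappa2 / (4 * N%:R) * (2 * y)) * (2 * N%:R).
    by field; rewrite lt0r_neq0.
  by rewrite [leRHS]mulrC; apply: ler_wpM2r => //; rewrite mulr_ge0 // ltW.
have habs : `|enorm (x t i - x t j) - D i j| <= sig.
  by rewrite -sqrtr_sqr ler_wsqrtr.
have hlt : sig < Dmin D by apply: (Dmin_gt hij) => a b hab; exact: hDmin.
move: habs; rewrite ler_norml => /andP[h1 h2].
split; first by rewrite subr_gt0.
have hm := Dmin_le D hij.
have hM := Dmax_ge D hij.
apply/andP; split; lra.
Qed.
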